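(* Let $\alpha$ be an infinite permutation. If for some positive integer $N$, $\alpha$ has an $N$-monotone subpermutation, then $\alpha$ is not equidistributed.
   Context: An infinite permutation is an equivalence class of sequences $(a[n])_{n\ge0}$ of pairwise distinct reals, where two sequences are equivalent if $a[i]<a[j]\iff b[i]<b[j]$ for all $i,j$; write $\alpha=(\alpha[n])_{n\ge0}$ with $\alpha[i]<\alpha[j]$ iff $a[i]<a[j]$ for a representative. A sequence $(a[n])$ in $[0,1]$ is equidistributed if $\lim_{n\to\infty}\frac{\#\{0\le i<n:a[i]<t\}}{n}=t$ for each $t\in[0,1]$; a permutation is equidistributed if it has an equidistributed representative in $[0,1]$. For a strictly increasing sequence of indices $(n_i)_{i\ge1}$, the subpermutation $(\alpha[n_i])$ is $N$-growing (resp. $N$-decreasing) if $n_{i+1}-n_i\le N$ and $\alpha[n_{i+1}]>\alpha[n_i]$ (resp. $<$) for all $i$; it is $N$-monotone if it is $N$-growing or $N$-decreasing. *)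

(* Defs.v *)
From Stdlib Require Import Reals Lra Lia List.
Open Scope R_scope.

(* A sequence of pairwise distinct reals (a representative of an infinite
   permutation). *)
Definition distinct_seq (a : nat -> R) : Prop :=
  forall i j : nat, i <> j -> a i <> a j.

(* Two sequences represent the same infinite permutation. *)
Definition same_perm (a b : nat -> R) : Prop :=
  forall i j : nat, a i < a j <-> b i < b j.

Definition count_below (b : nat -> R) (t : R) (n : nat) : nat :=
  length (filter (fun i => if Rlt_dec (b i) t then true else false) (seq 0 n)).

Definition equidistributed_seq (b : nat -> R) : Prop :=
  (forall n, 0 <= b n <= 1) /\
  forall t : R, 0 <= t <= 1 ->
    Un_cv (fun n => INR (count_below b t n) / INR n) t.

Definition equidistributed_perm (a : nat -> R) : Prop :=
  exists b : nat -> R, distinct_seq b /\ same_perm a b /\ equidistributed_seq b.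

Definition N_growing (a : nat -> R) (N : nat) : Prop :=
  exists n : nat -> nat, forall i : nat,
    (n i < n (S i))%nat /\ (n (S i) - n i <= N)%nat /\ a (n i) < a (n (S i)).

Definition N_decreasing (a : nat -> R) (N : nat) : Prop :=
  exists n : nat -> nat, forall i : nat,
    (n i < n (S i))%nat /\ (n (S i) - n i <= N)%nat /\ a (n (S i)) < a (n i).

Definition N_monotone (a : nat -> R) (N : nat) : Prop :=
  N_growing a N \/ N_decreasing a N.

(* Main.v *)
Require Import Defs.
From Stdlib Require Import Reals Lra Lia List.
Open Scope R_scope.

Lemma cb_0 b t : count_below b t 0 = 0%nat.
Proof. reflexivity. Qed.

Lemma cb_S b t n : count_below b t (S n) =
  (count_below b t n + if Rlt_dec (b n) t then 1 else 0)%nat.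
Proof.
  unfold count_below. rewrite seq_S, filter_app, length_app. simpl.
  destruct (Rlt_dec (b n) t); simpl; lia.
Qed.

Lemma cb_mono b t1 t2 n k : t1 <= t2 ->
  (count_below b t1 (n+k) + count_below b t2 n <=
   count_below b t2 (n+k) + count_below b t1 n)%nat.
Proof.
  intros H. induction k.
  - rewrite Nat.add_0_r. lia.
  - rewrite Nat.add_succ_r, !cb_S.
    destruct (Rlt_dec (b (n+k)%nat) t1); destruct (Rlt_dec (b (n+k)%nat) t2);
      try lra; lia.
Qed.

Section Key.
Variables (b : nat -> R) (N : nat) (m : nat -> nat) (t1 t2 : R).
Hypothesis HN : (0 < N)%nat.
Hypothesis Hm : forall i, (m i < m (S i) /\ m (S i) - m i <= N)%nat.
Hypothesis Hb : forall i, t1 <= b (m i) < t2.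

Let c1 := count_below b t1.
Let c2 := count_below b t2.

Lemma step_at i : (c1 (S (m i)) = c1 (m i) /\ c2 (S (m i)) = S (c2 (m i)))%nat.
Proof.
  unfold c1, c2. rewrite !cb_S. destruct (Hb i).
  destruct (Rlt_dec (b (m i)) t1); destruct (Rlt_dec (b (m i)) t2); try lra; lia.
Qed.

Lemma t12 : t1 <= t2.
Proof. destruct (Hb 0). lra. Qed.

Lemma L1 j : (c1 (S (m j)) + S j <= c2 (S (m j)))%nat.
Proof.
  induction j.
  - destruct (step_at 0) as [E1 E2]. rewrite E1, E2.
    pose proof (cb_mono b t1 t2 0 (m 0) t12) as H. rewrite !cb_0, Nat.add_0_l in H. unfold c1, c2. lia.
  - destruct (step_at (S j)) as [E1 E2]. rewrite E1, E2.
    destruct (Hm j) as [A B].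
    pose proof (cb_mono b t1 t2 (S (m j)) (m (S j) - S (m j)) t12) as M.
    replace (S (m j) + (m (S j) - S (m j)))%nat with (m (S j)) in M by lia.
    unfold c1, c2 in *. lia.
Qed.

Lemma L2 j : (m j <= m 0 + j * N)%nat.
Proof. induction j; [lia|]. destruct (Hm j). simpl. lia. Qed.

Lemma L3 n : (m 0 < n)%nat -> exists j, (m j < n <= m (S j))%nat.
Proof.
  induction n; intros H; [lia|].
  destruct (Nat.eq_dec n (m 0)) as [E|E].
  - exists 0%nat. destruct (Hm 0). lia.
  - destruct IHn as [j [A B]]; [lia|].
    destruct (Nat.eq_dec n (m (S j))) as [E2|E2].
    + exists (S j). destruct (Hm (S j)). lia.
    + exists j. lia.
Qed.

Lemma Lcount n : (n + N * c1 n <= m 0 + N * c2 n)%nat.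
Proof.
  destruct (Nat.le_gt_cases n (m 0)) as [H|H].
  - pose proof (cb_mono b t1 t2 0 n t12) as H0. rewrite !cb_0, Nat.add_0_l in H0. unfold c1, c2.
    assert (count_below b t1 n <= count_below b t2 n)%nat by lia. nia.
  - destruct (L3 n H) as [j [A B]].
    pose proof (L1 j) as C.
    pose proof (cb_mono b t1 t2 (S (m j)) (n - S (m j)) t12) as M.
    replace (S (m j) + (n - S (m j)))%nat with n in M by lia.
    pose proof (L2 j). destruct (Hm j).
    assert (c1 n + S j <= c2 n)%nat by (unfold c1, c2 in *; lia).
    assert (N * (c1 n + S j) <= N * c2 n)%nat by (apply Nat.mul_le_mono_l; lia).
    nia.
Qed.

Lemma key : 0 <= t1 <= 1 -> 0 <= t2 <= 1 -> t2 - t1 < / INR N ->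
  ~ equidistributed_seq b.
Proof.
  intros T1 T2 D [_ Heq].
  pose proof (Heq t1 T1) as C1. pose proof (Heq t2 T2) as C2.
  assert (NR : 0 < INR N) by (apply lt_0_INR; lia).
  set (d := t2 - t1) in *.
  set (dl := 1 - INR N * d).
  assert (Hdl : 0 < dl).
  { unfold dl. apply Rmult_lt_compat_l with (r := INR N) in D; auto.
    rewrite Rinv_r in D by lra. lra. }
  set (eps := dl / (4 * INR N)).
  assert (He : 0 < eps) by (unfold eps; apply Rdiv_lt_0_compat; lra).
  destruct (C1 eps He) as [K1 HK1]. destruct (C2 eps He) as [K2 HK2].
  destruct (INR_unbounded (2 * INR (m 0) / dl)) as [M HM].
  set (n := S (K1 + K2 + M)).
  assert (n1 : (n >= K1)%nat) by (unfold n; lia).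
  assert (n2 : (n >= K2)%nat) by (unfold n; lia).
  specialize (HK1 n n1). specialize (HK2 n n2).
  unfold R_dist in HK1, HK2.
  assert (Hn : INR M < INR n) by (apply lt_INR; unfold n; lia).
  assert (Hn0 : 0 < INR n) by (apply lt_0_INR; unfold n; lia).
  pose proof (Lcount n) as L.
  apply le_INR in L. rewrite !plus_INR, !mult_INR in L.
  fold c1 c2 in HK1, HK2.
  set (x1 := INR (c1 n)) in *. set (x2 := INR (c2 n)) in *.
  set (r := INR n) in *.
  assert (A1 : (t1 - eps) * r < x1).
  { apply Rabs_def2 in HK1. destruct HK1.
    assert (x1 = (x1 / r) * r) by (field; lra). nra. }
  assert (A2 : x2 < (t2 + eps) * r).
  { apply Rabs_def2 in HK2. destruct HK2.
    assert (x2 = (x2 / r) * r) by (field; lra). nra. }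
  assert (A3 : INR N * (x2 - x1) < INR N * ((d + 2 * eps) * r)).
  { apply Rmult_lt_compat_l; auto. unfold d. nra. }
  assert (A4 : INR N * ((d + 2 * eps) * r) = (1 - dl / 2) * r).
  { unfold eps, dl. field. lra. }
  assert (A5 : 2 * INR (m 0) / dl * dl = 2 * INR (m 0)) by (field; lra).
  assert (A6 : 2 * INR (m 0) / dl * dl < r * dl) by nra.
  nra.
Qed.

End Key.

Theorem proposition1 (a : nat -> R) (N : nat) :
  distinct_seq a -> (0 < N)%nat -> N_monotone a N -> ~ equidistributed_perm a.
Proof.
  intros Hd HN Hmono [b [Hdb [Hsame Heq]]].
  pose proof Heq as [Hb01 _].
  assert (NR : 0 < INR N) by (apply lt_0_INR; lia).
  assert (Ie : 0 < / INR N) by (apply Rinv_0_lt_compat; lra).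
  destruct Hmono as [[n Hn] | [n Hn]].
  - set (u := fun i => b (n i)).
    assert (G : Un_growing u).
    { intro i. unfold u. destruct (Hn i) as [_ [_ HH]]. apply Hsame in HH. lra. }
    assert (U : has_ub u).
    { exists 1. intros x [i ->]. unfold u. apply Hb01. }
    destruct (growing_cv u G U) as [l Hl].
    pose proof (growing_ineq u l G Hl) as Hle.
    assert (Hlt : forall i, u i < l).
    { intro i. pose proof (Hle (S i)). unfold u in *.
      destruct (Hn i) as [_ [_ HH]]. apply Hsame in HH. lra. }
    assert (l1 : l <= 1).
    { destruct (Rle_lt_dec l 1) as [h|h]; auto.
      destruct (Hl (l - 1)) as [K HK]; [lra|].
      specialize (HK K (le_n K)). unfold R_dist in HK.
      apply Rabs_def2 in HK. pose proof (Hb01 (n K)). unfold u in *. lra. }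
    destruct (Hl (/ INR N) Ie) as [K HK].
    specialize (HK K (le_n K)). unfold R_dist in HK.
    rewrite Rabs_left1 in HK by (pose proof (Hle K); lra).
    apply (key b N (fun i => n (S (K + i))) (u K) l HN).
    + intro i. rewrite Nat.add_succ_r. destruct (Hn (S (K+i))) as [A [B _]]. split; auto.
    + intro i. split.
      * apply Rlt_le. clear HK. induction i.
        -- rewrite Nat.add_0_r. unfold u. destruct (Hn K) as [_ [_ HH]].
           apply Hsame in HH. exact HH.
        -- eapply Rlt_trans; [exact IHi|]. rewrite Nat.add_succ_r.
           destruct (Hn (S (K+i))) as [_ [_ HH]]. apply Hsame in HH. exact HH.
      * apply (Hlt (S (K + i))).
    + split; [apply Hb01|]. apply Hb01.
    + split; [|exact l1]. pose proof (Hle K). pose proof (Hb01 (n K)). unfold u in *. lra.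
    + lra.
    + exact Heq.
  - set (u := fun i => b (n i)).
    assert (G : Un_decreasing u).
    { intro i. unfold u. destruct (Hn i) as [_ [_ HH]]. apply Hsame in HH. lra. }
    assert (U : has_lb u).
    { exists 0. intros x [i ->]. unfold opp_seq, u. pose proof (Hb01 (n i)). lra. }
    destruct (decreasing_cv u G U) as [l Hl].
    pose proof (decreasing_ineq u l G Hl) as Hle.
    assert (Hlt : forall i, l < u i).
    { intro i. pose proof (Hle (S i)). unfold u in *.
      destruct (Hn i) as [_ [_ HH]]. apply Hsame in HH. lra. }
    assert (l0 : 0 <= l).
    { destruct (Rle_lt_dec 0 l) as [h|h]; auto.
      destruct (Hl (- l)) as [K HK]; [lra|].
      specialize (HK K (le_n K)). unfold R_dist in HK.
      apply Rabs_def2 in HK. pose proof (Hb01 (n K)). unfold u in *. lra. }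
    destruct (Hl (/ INR N) Ie) as [K HK].
    specialize (HK K (le_n K)). unfold R_dist in HK.
    rewrite Rabs_right in HK by (pose proof (Hle K); lra).
    apply (key b N (fun i => n (S (K + i))) l (u K) HN).
    + intro i. rewrite Nat.add_succ_r. destruct (Hn (S (K+i))) as [A [B _]]. split; auto.
    + intro i. split.
      * apply Rlt_le, (Hlt (S (K + i))).
      * clear HK. induction i.
        -- rewrite Nat.add_0_r. unfold u. destruct (Hn K) as [_ [_ HH]].
           apply Hsame in HH. exact HH.
        -- eapply Rlt_trans; [|exact IHi]. rewrite Nat.add_succ_r.
           destruct (Hn (S (K+i))) as [_ [_ HH]]. apply Hsame in HH. exact HH.
    + split; [exact l0|]. pose proof (Hle K). pose proof (Hb01 (n K)). unfold u in *. lra.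
    + split; [apply Hb01|]. apply Hb01.
    + lra.
    + exact Heq.
Qed.
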